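(* Let $(S^1,V^1)$ and $(S^2,V^2)$ be normal $\mathbb{Q}$-VASR abstractions of equal concrete dimension. Then the $\mathbb{Q}$-VASR abstraction $(S,V)$ computed by the join algorithm described in the context is normal and is a least upper bound of $(S^1,V^1)$ and $(S^2,V^2)$ with respect to $\preceq$.
   Context: A $\mathbb{Q}$-VASR of dimension $d$ is a finite set $V\subseteq\{0,1\}^d\times\mathbb{Q}^d$ of transformers $(\vec r,\vec a)$; $\vec u\to_V\vec v$ iff $\vec v=\vec r*\vec u+\vec a$ for some $(\vec r,\vec a)\in V$ ($*$ pointwise product). For transition systems on $\mathbb{Q}^n,\mathbb{Q}^m$, a linear simulation $A\Vdash_S B$ is $S\in\mathbb{Q}^{m\times n}$ with $\vec u\to_A\vec v\Rightarrow S\vec u\to_BS\vec v$. A $\mathbb{Q}$-VASR abstraction is a pair $(S,V)$ with $S\in\mathbb{Q}^{d\times n}$ and $V$ a $d$-dimensional $\mathbb{Q}$-VASR ($n$ = concrete dimension, $d$ = abstract dimension). Preorder: $(S^1,V^1)\preceq(S^2,V^2)$ (abstract dimensions $d,e$) iff there exists $T\in\mathbb{Q}^{e\times d}$ with $V^1\Vdash_TV^2$ and $TS^1=S^2$. An upper bound of two abstractions is an abstraction $\succeq$ both; a least upper bound is an upper bound $\preceq$ every upper bound. Coherence: dimensions $i,j$ of $V$ are coherent if $r_i=r_j$ for all $(\vec r,\vec a)\in V$; equivalence classes are coherence classes. For a coherence class $C=\{c_1<\dots<c_k\}$ of a $d$-dimensional $V$, $\pi_C$ is the $k\times d$ matrix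 with rows $\vec e_{c_1},\dots,\vec e_{c_k}$. A row vector or matrix is coherent w.r.t. $V$ if each row has nonzero entries only in columns of one coherence class. $(S,V)$ is normal if there is no nonzero row vector $\vec z$ coherent w.r.t. $V$ with $\vec zS=0$. For $T$ coherent w.r.t. $V$ with no zero rows, $\mathrm{image}(V,T)=\{(T\rhd\vec r,T\vec a):(\vec r,\vec a)\in V\}$, with $(T\rhd\vec r)_i=r_j$ for any $j$ with $T_{ij}\neq0$. For matrices $A,B$ with equal numbers of columns, $\mathit{pushout}(A,B)$ returns $(U^1,U^2)$ whose row pairs $(U^1_i,U^2_i)$ form a basis of the vector space $\{(\vec u^1,\vec u^2):\vec u^1A=\vec u^2B\}$. Join algorithm on input $(S^1,V^1),(S^2,V^2)$: start with empty matrices $S,T^1,T^2$. For each coherence class $C^1$ of $V^1$ and each coherence class $C^2$ of $V^2$: compute $(U^1,U^2)=\mathit{pushout}(\pi_{C^1}S^1,\pi_{C^2}S^2)$; append the rows of $U^1\pi_{C^1}S^1$ to $S$, the rows of $U^1\pi_{C^1}$ to $T^1$, and the rows of $U^2\pi_{C^2}$ to $T^2$. Then set $V=\mathrm{image}(V^1,T^1)\cup\mathrm{image}(V^2,T^2)$ and return $(S,V)$. *)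

(* Defs.v *)
From HB Require Import structures.
From mathcomp Require Import all_boot all_order all_algebra.
Set Implicit Arguments.
Unset Strict Implicit.
Unset Printing Implicit Defensive.
Import Order.TTheory GRing.Theory Num.Theory.
Local Open Scope ring_scope.

Definition transformer (d : nat) := ({ffun 'I_d -> bool} * 'cV[rat]_d)%type.
Definition qvasr (d : nat) := seq (transformer d).

Definition apply_tr d (t : transformer d) (u : 'cV[rat]_d) : 'cV[rat]_d :=
  \col_i (((t.1 i : nat)%:R) * u i 0) + t.2.

Definition vstep d (V : qvasr d) (u v : 'cV[rat]_d) : Prop :=
  exists2 t, t \in V & v = apply_tr t u.

Definition lin_sim n m (A : 'cV[rat]_n -> 'cV[rat]_n -> Prop)
  (B : 'cV[rat]_m -> 'cV[rat]_m -> Prop) (S : 'M[rat]_(m, n)) : Prop :=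
  forall u v, A u v -> B (S *m u) (S *m v).

Record abstraction (n : nat) := Abstraction {
  adim : nat;
  amat : 'M[rat]_(adim, n);
  avasr : qvasr adim }.

Definition abs_le n (A B : abstraction n) : Prop :=
  exists T : 'M[rat]_(adim B, adim A),
    lin_sim (vstep (avasr A)) (vstep (avasr B)) T /\ T *m amat A = amat B.

Definition is_ub n (A1 A2 B : abstraction n) : Prop := abs_le A1 B /\ abs_le A2 B.

Definition is_lub n (A1 A2 B : abstraction n) : Prop :=
  is_ub A1 A2 B /\ forall C : abstraction n, is_ub A1 A2 C -> abs_le B C.

Definition coherent d (V : qvasr d) (i j : 'I_d) : bool :=
  all (fun t : transformer d => t.1 i == t.1 j) V.

Definition coh_class d (V : qvasr d) (i : 'I_d) : {set 'I_d} :=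
  [set j | coherent V i j].

Definition coh_classes d (V : qvasr d) : {set {set 'I_d}} :=
  [set coh_class V i | i : 'I_d].

Definition coherent_row d (V : qvasr d) (z : 'rV[rat]_d) : Prop :=
  exists i : 'I_d, forall j : 'I_d, z 0 j != 0 -> coherent V i j.

Definition normal n (A : abstraction n) : Prop :=
  forall z : 'rV[rat]_(adim A), z != 0 -> coherent_row (avasr A) z ->
    z *m amat A != 0.

(* pi_C: rows e_{c_1}, ..., e_{c_k} with c_1 < ... < c_k. *)
Definition pi_mx d (C : {set 'I_d}) : 'M[rat]_(#|C|, d) :=
  \matrix_(i < #|C|, j < d) ((enum_val i == j)%:R).

Definition rhd k d (T : 'M[rat]_(k, d)) (r : {ffun 'I_d -> bool}) : {ffun 'I_k -> bool} :=
  [ffun i => if [pick j | T i j != 0] is Some j then r j else false].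

Definition vimage k d (V : qvasr d) (T : 'M[rat]_(k, d)) : qvasr k :=
  [seq (rhd T t.1, T *m t.2) | t <- V].

(* (U1, U2) is a valid output of pushout(A, B): the row pairs (U1_i, U2_i)
   form a basis of {(u1, u2) : u1 A = u2 B}. *)
Definition is_pushout k1 k2 n (A : 'M[rat]_(k1, n)) (B : 'M[rat]_(k2, n))
  p (U1 : 'M[rat]_(p, k1)) (U2 : 'M[rat]_(p, k2)) : Prop :=
  row_free (row_mx U1 U2) /\
  forall (u1 : 'rV[rat]_k1) (u2 : 'rV[rat]_k2),
    u1 *m A = u2 *m B <-> (row_mx u1 u2 <= row_mx U1 U2)%MS.

Definition join_pairs d1 d2 (V1 : qvasr d1) (V2 : qvasr d2) :
  seq ({set 'I_d1} * {set 'I_d2}) :=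
  [seq (C1, C2) | C1 <- enum (coh_classes V1), C2 <- enum (coh_classes V2)].

(* join_rows S1 S2 ps k S T1 T2: running the loop of the join algorithm over
   the list of class pairs ps (with any valid choice of pushout bases) yields
   the matrices S, T1, T2 (rows appended in processing order). *)
Inductive join_rows n d1 d2 (S1 : 'M[rat]_(d1, n)) (S2 : 'M[rat]_(d2, n)) :
  seq ({set 'I_d1} * {set 'I_d2}) ->
  forall k, 'M[rat]_(k, n) -> 'M[rat]_(k, d1) -> 'M[rat]_(k, d2) -> Prop :=
| join_nil : join_rows S1 S2 [::] (0 : 'M[rat]_(0, n)) (0 : 'M[rat]_(0, d1)) (0 : 'M[rat]_(0, d2))
| join_cons (C1 : {set 'I_d1}) (C2 : {set 'I_d2}) ps k
    (S : 'M[rat]_(k, n)) (T1 : 'M[rat]_(k, d1)) (T2 : 'M[rat]_(k, d2))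
    p (U1 : 'M[rat]_(p, #|C1|)) (U2 : 'M[rat]_(p, #|C2|)) :
    is_pushout (pi_mx C1 *m S1) (pi_mx C2 *m S2) U1 U2 ->
    join_rows S1 S2 ps S T1 T2 ->
    join_rows S1 S2 ((C1, C2) :: ps)
      (col_mx (U1 *m pi_mx C1 *m S1) S)
      (col_mx (U1 *m pi_mx C1) T1)
      (col_mx (U2 *m pi_mx C2) T2).

(* Main.v *)
Require Import Defs.
From HB Require Import structures.
From mathcomp Require Import all_boot all_order all_algebra.
From mathcomp Require Import ring lra.
From Stdlib Require Import Classical_Prop.
Import Order.TTheory GRing.Theory Num.Theory.
Local Open Scope ring_scope.
Set Implicit Arguments.
Unset Strict Implicit.
Unset Printing Implicit Defensive.

Definition suppin d (w : 'rV[rat]_d) (C : {set 'I_d}) := forall j, w 0 j != 0 -> j \in C.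

Lemma pi_supp p d (C : {set 'I_d}) (U : 'M[rat]_(p, #|C|)) a j :
  (U *m pi_mx C) a j != 0 -> j \in C.
Proof.
apply: contraR => jC; rewrite mxE big1 // => l _; rewrite mxE.
have -> : (enum_val l == j) = false.
  by apply/negbTE; apply: contraNneq jC => <-; exact: enum_valP.
by rewrite mulr0.
Qed.

Lemma pi_row d (C : {set 'I_d}) (u : 'rV[rat]_#|C|) l :
  (u *m pi_mx C) 0 (enum_val l) = u 0 l.
Proof.
rewrite mxE (bigD1 l) //= big1 ?addr0.
  by rewrite mxE eqxx mulr1.
move=> m ml; rewrite mxE.
have -> : (enum_val m == enum_val l) = false.
  by apply/negbTE; apply: contra ml => /eqP/enum_val_inj ->.
by rewrite mulr0.
Qed.

Lemma pi_inj d (C : {set 'I_d}) (u : 'rV[rat]_#|C|) : u *m pi_mx C = 0 -> u = 0.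
Proof.
move=> H; apply/matrixP => i l; rewrite (ord1 i) -pi_row H !mxE //.
Qed.

Lemma pi_decomp d (C : {set 'I_d}) (w : 'rV[rat]_d) :
  suppin w C -> w = (w *m (pi_mx C)^T) *m pi_mx C.
Proof.
move=> Hw; apply/matrixP => i j; rewrite (ord1 i).
case: (boolP (j \in C)) => jC.
  rewrite -{2}(enum_rankK_in jC jC) pi_row mxE.
  rewrite (bigD1 j) //= big1 ?addr0.
    by rewrite !mxE enum_rankK_in // eqxx mulr1.
  move=> m mj; rewrite !mxE enum_rankK_in //.
  by rewrite eq_sym (negbTE mj) mulr0.
have -> : w 0 j = 0 by apply/eqP; apply: contraR jC => /Hw.
symmetry; apply/eqP; apply: contraR jC; exact: pi_supp.
Qed.

Lemma coherentP d (V : qvasr d) i j :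
  reflect (forall t, t \in V -> t.1 i = t.1 j) (coherent V i j).
Proof. by apply: (iffP allP) => H t /H => [/eqP|->]. Qed.

Lemma coherent_refl d (V : qvasr d) i : coherent V i i.
Proof. by apply/coherentP. Qed.

Lemma coherent_sym d (V : qvasr d) i j : coherent V i j -> coherent V j i.
Proof. by move/coherentP=> H; apply/coherentP => t /H ->. Qed.

Lemma coherent_trans d (V : qvasr d) i j l :
  coherent V i j -> coherent V j l -> coherent V i l.
Proof.
by move/coherentP=> H1 /coherentP H2; apply/coherentP => t tV; rewrite H1 // H2.
Qed.

Lemma class_eq d (V : qvasr d) C p :
  C \in coh_classes V -> p \in C -> C = coh_class V p.
Proof.
case/imsetP => x _ -> ; rewrite inE => hxp.
apply/setP => j; rewrite !inE; apply/idP/idP => H.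
  exact: coherent_trans (coherent_sym hxp) H.
exact: coherent_trans hxp H.
Qed.

Lemma class_mem d (V : qvasr d) p : coh_class V p \in coh_classes V.
Proof. exact: imset_f. Qed.

Lemma normalE n (A : abstraction n) : normal A ->
  forall C w, C \in coh_classes (avasr A) -> suppin w C -> w *m amat A = 0 -> w = 0.
Proof.
move=> HN C w /imsetP [x _ ->] Hs Hw0.
apply/eqP; apply: contraT => wn0.
have := HN w wn0; rewrite Hw0 eqxx; apply => //.
by exists x => j /Hs; rewrite inE.
Qed.

Definition Dm d (r : {ffun 'I_d -> bool}) : 'M[rat]_d :=
  diag_mx (\row_i ((r i : nat)%:R)).

Lemma apply_trE d (t : transformer d) u : apply_tr t u = Dm t.1 *m u + t.2.
Proof.
rewrite /apply_tr /Dm mul_diag_mx; congr (_ + _).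
by apply/matrixP => i j; rewrite !mxE (ord1 j).
Qed.

Lemma exists_big (L : seq rat) : exists l : rat, 0 <= l /\ forall v, v \in L -> v < l.
Proof.
elim: L => [|a L [l [l0 Hl]]]; first by exists 0.
exists (l + `|a| + 1); split.
  have := normr_ge0 a; lra.
move=> v; rewrite inE => /orP [/eqP ->|/Hl]; have := ler_norm a; have := normr_ge0 a; lra.
Qed.

Definition bad e (p q : 'cV[rat]_e) : rat :=
  if [pick j | q j 0 != 0] is Some j then - p j 0 / q j 0 else 0.

Lemma badP e (p q : 'cV[rat]_e) (l0 l : rat) :
  p + l0 *: q != 0 -> p + l *: q = 0 -> l = bad p q.
Proof.
move=> H0 H; rewrite /bad; case: pickP => [j qj|Hq].
  have /matrixP /(_ j 0) := H; rewrite !mxE => E.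
  apply: (mulIf qj); rewrite divfK //; lra.
suff q0 : q = 0 by rewrite q0 !scaler0 !addr0 in H0 H; rewrite H eqxx in H0.
apply/matrixP => i j; rewrite (ord1 j) mxE; apply/eqP; have := Hq i; by move/negbFE.
Qed.

Lemma avoid d e (I : eqType) (s : seq I) (M : I -> 'M[rat]_(e, d)) (b : I -> 'cV[rat]_e) :
  (forall c, c \in s -> exists x, M c *m x + b c != 0) ->
  exists x, forall c, c \in s -> M c *m x + b c != 0.
Proof.
elim: s => [|c s IH] H; first by exists 0.
have [x Hx] := IH (fun c' h => H c' (mem_behead (s:=c :: s) h)).
have [y Hy] := H c (mem_head _ _).
pose p c' := M c' *m x + b c'.
pose q c' := M c' *m (y - x).
have E c' l : M c' *m (x + l *: (y - x)) + b c' = p c' + l *: q c'.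
  by rewrite /p /q mulmxDr -scalemxAr addrAC.
have [l [_ Hl]] := exists_big [seq bad (p c') (q c') | c' <- c :: s].
exists (x + l *: (y - x)) => c' hc'; rewrite E; apply/eqP => E0.
have : exists l0, p c' + l0 *: q c' != 0.
  move: hc'; rewrite inE => /orP [/eqP ->|hs].
    by exists 1; rewrite -E scale1r (_ : x + (y - x) = y) // addrC subrK.
  by exists 0; rewrite scale0r addr0; exact: Hx.
case=> l0 /badP /(_ E0) El.
have := Hl _ (map_f (fun c' => bad (p c') (q c')) hc'); rewrite -El; lra.
Qed.

Lemma cover d e (I : eqType) (s : seq I) (M : I -> 'M[rat]_(e, d)) (b : I -> 'cV[rat]_e) :
  (forall x, exists2 c, c \in s & M c *m x + b c = 0) ->
  exists2 c, c \in s & forall x, M c *m x + b c = 0.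
Proof.
move=> H; apply: Classical_Prop.NNPP => Hn.
have [|x Hx] := @avoid d e I s M b.
  move=> c cs; apply: Classical_Prop.NNPP => Hc; apply: Hn; exists c => // x.
  by apply/eqP; apply: Classical_Prop.NNPP => Hx; apply: Hc; exists x; apply/negP.
have [c cs /eqP] := H x; exact/negP/Hx.
Qed.

Lemma unif d e (V : qvasr d) (V' : qvasr e) (T : 'M[rat]_(e, d)) :
  lin_sim (vstep V) (vstep V') T -> forall t, t \in V ->
  exists2 t', t' \in V' & forall x, T *m apply_tr t x = apply_tr t' (T *m x).
Proof.
move=> Hs t tV.
pose M (t' : transformer e) := T *m Dm t.1 - Dm t'.1 *m T.
pose b (t' : transformer e) := T *m t.2 - t'.2.
have E t' x : T *m apply_tr t x - apply_tr t' (T *m x) = M t' *m x + b t'.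
  rewrite !apply_trE /M /b mulmxDr mulmxBl !mulmxA opprD addrACA //.
have [|t' t'V Ht'] := @cover d e _ V' M b.
  move=> x; have [|t' t'V Heq] := Hs x (apply_tr t x); first by exists t.
  by exists t' => //; rewrite -E Heq subrr.
by exists t' => // x; apply/eqP; rewrite -subr_eq0 E Ht'.
Qed.

Lemma unif_a d e (t : transformer d) (t' : transformer e) (T : 'M[rat]_(e, d)) :
  (forall x, T *m apply_tr t x = apply_tr t' (T *m x)) -> T *m t.2 = t'.2.
Proof. by move/(_ 0); rewrite !apply_trE !mulmx0 !add0r. Qed.

Lemma unif_r d e (t : transformer d) (t' : transformer e) (T : 'M[rat]_(e, d)) i q :
  (forall x, T *m apply_tr t x = apply_tr t' (T *m x)) -> T i q != 0 -> t.1 q = t'.1 i.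
Proof.
move=> H Tiq.
have Ha := unif_a H.
have := H (delta_mx q 0).
rewrite !apply_trE mulmxDr Ha => /(addIr t'.2) /matrixP /(_ i 0).
rewrite mulmxA -!colE /Dm mul_mx_diag mul_diag_mx !mxE => E.
move: Tiq; apply: contraNeq => ne; move: E.
case: (t.1 q) (t'.1 i) ne => [] [] //= _.
  by rewrite mulr1 mul0r => ->.
by rewrite mulr0 mul1r => <-.
Qed.

Lemma sim_image d k (V : qvasr d) (T : 'M[rat]_(k, d)) :
  (forall i j j', T i j != 0 -> T i j' != 0 -> coherent V j j') ->
  forall t, t \in V -> forall u,
  T *m apply_tr t u = apply_tr (rhd T t.1, T *m t.2) (T *m u).
Proof.
move=> Hc t tV u; rewrite !apply_trE mulmxDr mulmxA; congr (_ + _).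
rewrite mulmxA; congr (_ *m _).
apply/matrixP => i j; rewrite /Dm mul_mx_diag mul_diag_mx !mxE ffunE /=.
have [->|Tij] := eqVneq (T i j) 0; first by rewrite mul0r mulr0.
case: pickP => [p /= Tip|H0]; last by have := H0 j; rewrite /= Tij.
by rewrite mulrC; have /coherentP -> := Hc _ _ _ Tij Tip.
Qed.

Section Join.
Variables (n d1 d2 : nat) (S1 : 'M[rat]_(d1, n)) (S2 : 'M[rat]_(d2, n)).

Definition pair_ok (P : {set 'I_d1} * {set 'I_d2}) :=
  (forall w, suppin w P.1 -> w *m S1 = 0 -> w = 0) /\
  (forall w, suppin w P.2 -> w *m S2 = 0 -> w = 0).

Lemma join_inv ps k S T1 T2 :
  join_rows S1 S2 ps S T1 T2 -> uniq ps -> (forall P, P \in ps -> pair_ok P) ->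
  [/\ T1 *m S1 = S, T2 *m S2 = S &
   exists blk : 'I_k -> ({set 'I_d1} * {set 'I_d2}),
    [/\ forall i, blk i \in ps,
        forall i j, T1 i j != 0 -> j \in (blk i).1,
        forall i j, T2 i j != 0 -> j \in (blk i).2,
        forall P w1 w2, P \in ps -> suppin w1 P.1 -> suppin w2 P.2 -> w1 *m S1 = w2 *m S2 ->
            exists c : 'rV_k, [/\ c *m T1 = w1, c *m T2 = w2 &
                                  forall i, c 0 i != 0 -> blk i = P] &
        forall P (c : 'rV_k), (forall i, c 0 i != 0 -> blk i = P) -> c *m S = 0 -> c = 0]].
Proof.
elim => [|C1 C2 {}ps {}k {}S {}T1 {}T2 p U1 U2 [Hfree Hpo] Hj IH] Hu Hok.
  split; rewrite ?mul0mx //; exists (fun _ => (set0, set0)).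
  split; try by case.
  by move=> P c _ _; apply/matrixP => i [].
move: Hu => /= /andP [Hnin Hu'].
have [HT1 HT2 [blk [Hb1 Hb2 Hb3 Hb4 Hb5]]] :=
  IH Hu' (fun P h => Hok P (mem_behead (s := (C1, C2) :: ps) h)).
have [/= N1 N2] := Hok (C1,C2) (mem_head _ _).
have EU : U1 *m (pi_mx C1 *m S1) = U2 *m (pi_mx C2 *m S2).
  apply/row_matrixP => i; rewrite !row_mul; apply/(Hpo _ _).2.
  rewrite -row_row_mx; exact: row_sub.
split.
- by rewrite mul_col_mx HT1.
- by rewrite mul_col_mx HT2 -!mulmxA EU.
pose blkf (i : 'I_(p + k)) := match split i with inl _ => (C1, C2) | inr j => blk j end.
have Bl a : blkf (lshift k a) = (C1, C2).
  by rewrite /blkf (unsplitK (inl a) : split (lshift k a) = inl a).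
have Br a : blkf (rshift p a) = blk a.
  by rewrite /blkf (unsplitK (inr a) : split (rshift p a) = inr a).
exists blkf; split.
- move=> i; rewrite -(splitK i); case: (split i) => a /=.
    by rewrite Bl mem_head.
  by rewrite Br inE Hb1 orbT.
- move=> i j; rewrite -(splitK i); case: (split i) => a /=.
    rewrite Bl col_mxEu; exact: pi_supp.
  rewrite Br col_mxEd; exact: Hb2.
- move=> i j; rewrite -(splitK i); case: (split i) => a /=.
    rewrite Bl col_mxEu; exact: pi_supp.
  rewrite Br col_mxEd; exact: Hb3.
- move=> P w1 w2; rewrite inE => /orP [/eqP ->|HP] s1 s2 E.
    have [D ED] : exists D, row_mx (w1 *m (pi_mx C1)^T) (w2 *m (pi_mx C2)^T)
                             = D *m row_mx U1 U2.
      apply/submxP; apply/(Hpo _ _).1.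
      by rewrite !mulmxA -(pi_decomp s1) -(pi_decomp s2).
    move: ED; rewrite mul_mx_row => /eq_row_mx [E1 E2].
    exists (row_mx D 0); split.
    + by rewrite mul_row_col mul0mx addr0 mulmxA -E1 -pi_decomp.
    + by rewrite mul_row_col mul0mx addr0 mulmxA -E2 -pi_decomp.
    + move=> i; rewrite -(splitK i); case: (split i) => a /=.
        by rewrite Bl.
      by rewrite row_mxEr mxE eqxx.
  have [c [E1 E2 Hc]] := Hb4 P w1 w2 HP s1 s2 E.
  exists (row_mx 0 c); split.
  + by rewrite mul_row_col mul0mx add0r.
  + by rewrite mul_row_col mul0mx add0r.
  + move=> i; rewrite -(splitK i); case: (split i) => a /=.
      by rewrite row_mxEl mxE eqxx.
    by rewrite row_mxEr Br; exact: Hc.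
- move=> P c Hc; rewrite -(hsubmxK c) mul_row_col => E0.
  case: (eqVneq P (C1, C2)) => [EP|NP].
    have cr0 : rsubmx c = 0.
      apply/matrixP => i j; rewrite (ord1 i) [RHS]mxE mxE; apply/eqP; apply: contraT => H.
      have := Hc _ H; rewrite Br EP => Eb; move: Hnin; by rewrite -Eb Hb1.
    rewrite cr0 mul0mx addr0 in E0.
    have h1 : lsubmx c *m U1 = 0.
      apply: pi_inj; apply: N1; first by move=> j; exact: pi_supp.
      by move: E0; rewrite !mulmxA.
    have h2 : lsubmx c *m U2 = 0.
      apply: pi_inj; apply: N2; first by move=> j; exact: pi_supp.
      by move: E0; rewrite -!mulmxA EU !mulmxA.
    have cl0 : lsubmx c = 0.
      apply: (row_free_inj Hfree); by rewrite /= mul_mx_row h1 h2 mul0mx row_mx0.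
    by rewrite cl0 cr0 row_mx0.
  have cl0 : lsubmx c = 0.
    apply/matrixP => i j; rewrite (ord1 i) [RHS]mxE mxE; apply/eqP; apply: contraT => H.
    by have := Hc _ H; rewrite Bl => EP; rewrite EP eqxx in NP.
  rewrite cl0 mul0mx add0r in E0.
  have cr0 : rsubmx c = 0.
    apply: (Hb5 P) E0 => i; rewrite mxE => H; rewrite -Br; exact: Hc.
  by rewrite cl0 cr0 row_mx0.
Qed.
End Join.

Lemma rhd_val d k (V : qvasr d) (T : 'M[rat]_(k, d)) t a p :
  (forall i j j', T i j != 0 -> T i j' != 0 -> coherent V j j') ->
  t \in V -> T a p != 0 -> rhd T t.1 a = t.1 p.
Proof.
move=> Hc tV hp; rewrite ffunE; case: pickP => [q /= hq|H0].
  by have /coherentP -> := Hc _ _ _ hq hp.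
by have := H0 p; rewrite /= hp.
Qed.

Lemma row_zero k d (T : 'M[rat]_(k, d)) l :
  (fun q => T l q != 0) =1 xpred0 -> row l T = 0.
Proof.
move=> H; apply/matrixP => a b; rewrite (ord1 a) !mxE.
by move: (H b) => /= /negbFE /eqP.
Qed.

Unset Implicit Arguments.
Set Strict Implicit.
Theorem proposition2 (n : nat) (A1 A2 : abstraction n) (k : nat)
  (S : 'M[rat]_(k, n)) (T1 : 'M[rat]_(k, adim A1)) (T2 : 'M[rat]_(k, adim A2)) :
  normal A1 -> normal A2 ->
  join_rows (amat A1) (amat A2) (join_pairs (avasr A1) (avasr A2)) S T1 T2 ->
  normal (Abstraction S (vimage (avasr A1) T1 ++ vimage (avasr A2) T2)) /\
  is_lub A1 A2 (Abstraction S (vimage (avasr A1) T1 ++ vimage (avasr A2) T2)).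
Proof.
move=> HN1 HN2 HJ.
set V1 := avasr A1; set V2 := avasr A2; set V := vimage V1 T1 ++ vimage V2 T2.
set ps := join_pairs V1 V2.
have Hu : uniq ps.
  rewrite /ps /join_pairs; apply: allpairs_uniq; try exact: enum_uniq.
  by move=> [a b] [c e] _ _ /= [-> ->].
have Hmem P : P \in ps -> P.1 \in coh_classes V1 /\ P.2 \in coh_classes V2.
  by case/allpairsP => [[a b] [/= ha hb ->]]; rewrite !mem_enum in ha hb.
have Hok P : P \in ps -> pair_ok (amat A1) (amat A2) P.
  move=> HP; have [h1 h2] := Hmem P HP; split => w.
    exact: (normalE HN1 h1).
  exact: (normalE HN2 h2).
have [HT1 HT2 [blk [Hb1 Hb2 Hb3 Hb4 Hb5]]] := join_inv HJ Hu Hok.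
have delta_supp i : forall j, (delta_mx 0 i : 'rV[rat]_k) 0 j != 0 -> blk j = blk i.
  move=> j; rewrite mxE eqxx /=; have [->//|_] := eqVneq j i; by rewrite eqxx.
have delta_nz i : (delta_mx 0 i : 'rV[rat]_k) != 0.
  apply/eqP => /matrixP /(_ 0 i); rewrite !mxE !eqxx /= => /eqP; by rewrite oner_eq0.
have Hnz1 i : exists p, T1 i p != 0.
  case: (pickP (fun p => T1 i p != 0)) => [p h|H0]; first by exists p.
  exfalso; move/eqP: (delta_nz i); apply; apply: (Hb5 (blk i)); first exact: delta_supp.
  by rewrite -rowE -HT1 row_mul row_zero // mul0mx.
have Hnz2 i : exists p, T2 i p != 0.
  case: (pickP (fun p => T2 i p != 0)) => [p h|H0]; first by exists p.
  exfalso; move/eqP: (delta_nz i); apply; apply: (Hb5 (blk i)); first exact: delta_supp.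
  by rewrite -rowE -HT2 row_mul row_zero // mul0mx.
have Hc1 i j j' : T1 i j != 0 -> T1 i j' != 0 -> coherent V1 j j'.
  move=> h h'; have [hc _] := Hmem _ (Hb1 i).
  by have := Hb2 _ _ h'; rewrite (class_eq hc (Hb2 _ _ h)) inE.
have Hc2 i j j' : T2 i j != 0 -> T2 i j' != 0 -> coherent V2 j j'.
  move=> h h'; have [_ hc] := Hmem _ (Hb1 i).
  by have := Hb3 _ _ h'; rewrite (class_eq hc (Hb3 _ _ h)) inE.
have inV1 t : t \in V1 -> (rhd T1 t.1, T1 *m t.2) \in V.
  by move=> tV; rewrite mem_cat; apply/orP; left; apply: (map_f _ tV).
have inV2 t : t \in V2 -> (rhd T2 t.1, T2 *m t.2) \in V.
  by move=> tV; rewrite mem_cat; apply/orP; right; apply: (map_f _ tV).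
have blk_coh a b : coherent V a b -> blk a = blk b.
  move/coherentP => H.
  have [p1 hp1] := Hnz1 a; have [q1 hq1] := Hnz1 b.
  have [p2 hp2] := Hnz2 a; have [q2 hq2] := Hnz2 b.
  have [ha1 ha2] := Hmem _ (Hb1 a); have [hb1 hb2] := Hmem _ (Hb1 b).
  have e1 : (blk a).1 = (blk b).1.
    rewrite (class_eq ha1 (Hb2 _ _ hp1)) (class_eq hb1 (Hb2 _ _ hq1)).
    apply: class_eq; first exact: class_mem.
    rewrite inE; apply/coherentP => t tV.
    by have := H _ (inV1 t tV); rewrite /= (rhd_val Hc1 tV hp1) (rhd_val Hc1 tV hq1).
  have e2 : (blk a).2 = (blk b).2.
    rewrite (class_eq ha2 (Hb3 _ _ hp2)) (class_eq hb2 (Hb3 _ _ hq2)).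
    apply: class_eq; first exact: class_mem.
    rewrite inE; apply/coherentP => t tV.
    by have := H _ (inV2 t tV); rewrite /= (rhd_val Hc2 tV hp2) (rhd_val Hc2 tV hq2).
  by move: e1 e2; case: (blk a) => ? ?; case: (blk b) => ? ? /= -> ->.
split.
  move=> z zn0 [i0 Hz] /=.
  case: (pickP (fun j => z 0 j != 0)) => [j0 hj0|H0]; last first.
    have z0 : z = 0 by apply/rowP => j; have := H0 j; rewrite mxE /= => /negbFE/eqP.
    by rewrite z0 eqxx in zn0.
  apply/eqP => zS; move/eqP: zn0; apply; apply: (Hb5 (blk j0)) zS => j hj.
  apply: blk_coh; exact: coherent_trans (coherent_sym (Hz _ hj)) (Hz _ hj0).
have sim1 : lin_sim (vstep V1) (vstep V) T1.
  move=> u v [t tV ->]; exists (rhd T1 t.1, T1 *m t.2); first exact: inV1.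
  exact: (sim_image Hc1 tV).
have sim2 : lin_sim (vstep V2) (vstep V) T2.
  move=> u v [t tV ->]; exists (rhd T2 t.1, T2 *m t.2); first exact: inV2.
  exact: (sim_image Hc2 tV).
split; first by split; [exists T1 | exists T2].
move=> B [[T'1 [sim'1 E'1]] [T'2 [sim'2 E'2]]] /=.
have Hc'1 l j j' : T'1 l j != 0 -> T'1 l j' != 0 -> coherent V1 j j'.
  move=> h h'; apply/coherentP => t tV; have [t' _ Ht] := unif sim'1 tV.
  by rewrite (unif_r Ht h) (unif_r Ht h').
have Hc'2 l j j' : T'2 l j != 0 -> T'2 l j' != 0 -> coherent V2 j j'.
  move=> h h'; apply/coherentP => t tV; have [t' _ Ht] := unif sim'2 tV.
  by rewrite (unif_r Ht h) (unif_r Ht h').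
have Erow l : row l T'1 *m amat A1 = row l T'2 *m amat A2.
  by rewrite -!row_mul E'1 E'2.
have R1 l q1 : T'1 l q1 != 0 -> exists q2, T'2 l q2 != 0.
  move=> h; case: (pickP (fun q => T'2 l q != 0)) => [q2 h2|H2]; first by exists q2.
  exfalso; have : row l T'1 = 0.
    apply: (normalE HN1 (class_mem _ q1)).
      by move=> j; rewrite mxE inE => h'; exact: Hc'1 h h'.
    by rewrite Erow row_zero // mul0mx.
  by move/matrixP/(_ 0 q1); rewrite !mxE => E; rewrite E eqxx in h.
have R2 l q2 : T'2 l q2 != 0 -> exists q1, T'1 l q1 != 0.
  move=> h; case: (pickP (fun q => T'1 l q != 0)) => [q1 h1|H1]; first by exists q1.
  exfalso; have : row l T'2 = 0.
    apply: (normalE HN2 (class_mem _ q2)).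
      by move=> j; rewrite mxE inE => h'; exact: Hc'2 h h'.
    by rewrite -Erow row_zero // mul0mx.
  by move/matrixP/(_ 0 q2); rewrite !mxE => E; rewrite E eqxx in h.
have Hrow l : exists c : 'rV_k, [/\ c *m T1 = row l T'1, c *m T2 = row l T'2 &
    forall i, c 0 i != 0 -> exists q1 q2, [/\ T'1 l q1 != 0, (blk i).1 = coh_class V1 q1,
                                             T'2 l q2 != 0 & (blk i).2 = coh_class V2 q2]].
  case: (pickP (fun q => T'1 l q != 0)) => [q1 hq1|H1].
    have [q2 hq2] := R1 l q1 hq1.
    pose P := (coh_class V1 q1, coh_class V2 q2).
    have HP : P \in ps.
      by rewrite /ps /join_pairs; apply: allpairs_f; rewrite mem_enum; exact: class_mem.
    have s1 : suppin (row l T'1) P.1.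
      by move=> j; rewrite mxE => h; rewrite inE; exact: Hc'1 hq1 h.
    have s2 : suppin (row l T'2) P.2.
      by move=> j; rewrite mxE => h; rewrite inE; exact: Hc'2 hq2 h.
    have [c [E1 E2 Hc]] := Hb4 P _ _ HP s1 s2 (Erow l).
    by exists c; split => // i /Hc ->; exists q1, q2.
  case: (pickP (fun q => T'2 l q != 0)) => [q2 hq2|H2].
    by have [q1 hq1] := R2 l q2 hq2; have := H1 q1; rewrite /= hq1.
  exists 0; rewrite !mul0mx !row_zero //; split => // i; by rewrite mxE eqxx.
have [cf Hcf] := fin_all_exists Hrow.
pose T : 'M[rat]_(adim B, k) := \matrix_(l, j) cf l 0 j.
have rowT l : row l T = cf l by apply/rowP => j; rewrite !mxE.
have TT1 : T *m T1 = T'1.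
  by apply/row_matrixP => l; rewrite row_mul rowT; case: (Hcf l).
have TT2 : T *m T2 = T'2.
  by apply/row_matrixP => l; rewrite row_mul rowT; case: (Hcf l).
exists T; split; last by rewrite /= -HT1 mulmxA TT1 E'1.
move=> u v [t]; rewrite mem_cat => /orP [] /mapP [t0 t0V ->] ->.
  have [t' t'V Ht'] := unif sim'1 t0V.
  exists t' => //.
  rewrite !apply_trE mulmxDr /= [T *m (T1 *m _)]mulmxA TT1 (unif_a Ht') !mulmxA; congr (_ + _); congr (_ *m _).
  apply/matrixP => l i; rewrite /Dm mul_mx_diag mul_diag_mx !mxE.
  have [->|Tli'] := eqVneq (cf l 0 i) 0; first by rewrite mul0r mulr0.
  rewrite mulrC; congr (_ * _); congr (_%:R); congr nat_of_bool.
  have [_ _ Hsupp] := Hcf l; have [q1 [q2 [hq1 eb1 _ _]]] := Hsupp i Tli'.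
  have [p hp] := Hnz1 i; rewrite (rhd_val Hc1 t0V hp) -(unif_r Ht' hq1).
  by have := Hb2 _ _ hp; rewrite eb1 inE => /coherentP/(_ _ t0V) ->.
have [t' t'V Ht'] := unif sim'2 t0V.
exists t' => //.
rewrite !apply_trE mulmxDr /= [T *m (T2 *m _)]mulmxA TT2 (unif_a Ht') !mulmxA; congr (_ + _); congr (_ *m _).
apply/matrixP => l i; rewrite /Dm mul_mx_diag mul_diag_mx !mxE.
have [->|Tli'] := eqVneq (cf l 0 i) 0; first by rewrite mul0r mulr0.
rewrite mulrC; congr (_ * _); congr (_%:R); congr nat_of_bool.
have [_ _ Hsupp] := Hcf l; have [q1 [q2 [_ _ hq2 eb2]]] := Hsupp i Tli'.
have [p hp] := Hnz2 i; rewrite (rhd_val Hc2 t0V hp) -(unif_r Ht' hq2).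
by have := Hb3 _ _ hp; rewrite eb2 inE => /coherentP/(_ _ t0V) ->.
Qed.
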